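(* There are infinitely many positive integers $n$ with $V(n+1)>V(n)$, and there are infinitely many positive integers $n$ with $V(n+1)<V(n)$.
   Context: For a positive integer $n$, an integer $a$ is called regular modulo $n$ if there exists an integer $x$ with $a^2x\equiv a \pmod n$. Let $V(n)$ denote the number of integers $a$ with $1\le a\le n$ that are regular modulo $n$. (Known fact: $V$ is multiplicative, $V(1)=1$, and $V(p^{\alpha})=p^{\alpha}-p^{\alpha-1}+1$ for a prime $p$ and $\alpha\ge1$.) *)

(* Defs.v *)
From mathcomp Require Import all_boot.
Set Implicit Arguments. Unset Strict Implicit. Unset Printing Implicit Defensive.

(* a is regular modulo n: there is an integer x with a^2 x = a (mod n).
   Over nat this is equivalent: any integer x may be replaced by its
   nonnegative representative mod n. *)
Definition regular (n a : nat) : Prop :=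
  exists x : nat, a ^ 2 * x = a %[mod n].

(* Decidable version for n >= 1: the witness can be taken in 0..n-1. *)
Definition regularb (n a : nat) : bool :=
  [exists x : 'I_n, a ^ 2 * x == a %[mod n]].

Lemma regularP n a : 0 < n -> reflect (regular n a) (regularb n a).
Proof.
move=> Hn; apply: (iffP existsP) => [[x /eqP Hx]|[x Hx]]; first by exists x.
exists (Ordinal (ltn_pmod x Hn)); apply/eqP => /=.
by rewrite -modnMmr modn_mod modnMmr.
Qed.

(* V(n) = number of a with 1 <= a <= n that are regular modulo n
   (meaningful for n >= 1, which is all the statement uses). *)
Definition V (n : nat) : nat :=
  #|[set a : 'I_n.+1 | (0 < (a : nat)) && regularb n a]|.

(* Main.v *)
Require Import Defs.
From mathcomp Require Import all_boot.
From mathcomp Require Import zify.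

Lemma V_le n : V n <= n.
Proof.
rewrite /V; apply: (leq_trans (subset_leq_card (_ : _ \subset [set~ (ord0 : 'I_n.+1)]))).
  2: by rewrite cardsC1 card_ord.
apply/subsetP => a; rewrite !inE => /andP[a0 _].
by apply/eqP => E; rewrite E in a0.
Qed.

Lemma V_prime p : prime p -> V p = p.
Proof.
move=> pp; have p0 := prime_gt0 pp; have p1 := prime_gt1 pp.
apply/eqP; rewrite eqn_leq V_le /V.
apply: (leq_trans _ (subset_leq_card (_ : [set~ (ord0 : 'I_p.+1)] \subset _))).
  by rewrite cardsC1 card_ord.
apply/subsetP => a; rewrite !inE => a0.
apply/andP; split.
  by rewrite lt0n; apply: contra a0 => /eqP a0; apply/eqP/val_inj.
apply/(regularP _ p0); exists (a ^ (p - 2)).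
rewrite -expnD.
have -> : 2 + (p - 2) = p by lia.
exact: fermat_little.
Qed.

Lemma V_four k : 1 < k -> V (4 * k) <= 4 * k - 2.
Proof.
move=> k1.
set m := 4 * k.
have m0 : 0 < m by rewrite /m; lia.
have h2 : 2 < m.+1 by rewrite /m; lia.
have h3 : m %/ 2 < m.+1 by rewrite /m; lia.
set A := (ord0 : 'I_m.+1) |: [set Ordinal h2; Ordinal h3].
have cA : #|A| = 3.
  rewrite /A cardsU1 cards2 !inE.
  have -> : (Ordinal h2 != Ordinal h3) = true.
    apply/negP => /eqP /(congr1 val) /=; rewrite /m; lia.
  have -> : (ord0 == Ordinal h2) = false by apply/negP => /eqP /(congr1 val).
  have -> : (ord0 == Ordinal h3) = false.
    apply/negP => /eqP /(congr1 val) /=; rewrite /m; lia.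
  by [].
have cC : #|~: A| = m - 2.
  have := cardsC A; rewrite cA card_ord; lia.
rewrite -cC /V; apply: subset_leq_card; apply/subsetP => a.
rewrite !inE => /andP[a0 /(regularP _ m0) [x Hx]].
apply/negP => /or3P [] /eqP E; rewrite E /= in a0 Hx.
- by [].
- have H4 : 4 %| m by rewrite /m dvdn_mulr.
  move: Hx => /(congr1 (modn^~ 4)) /=; rewrite !modn_dvdm //.
  by rewrite (_ : 2 ^ 2 = 4) // modnMr.
- move: Hx.
  have -> : m %/ 2 = 2 * k by rewrite /m; lia.
  have -> : (2 * k) ^ 2 * x = m * (k * x) by rewrite /m; lia.
  rewrite modnMr modn_small /m; lia.
Qed.

Lemma prime3mod4 m : m %% 4 = 3 -> exists p, [/\ prime p, p %| m & p %% 4 = 3].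
Proof.
elim: m {-2}m (leqnn m) => [|M IH] m Hm Hmod.
  have : m = 0 by lia. by move=> E; rewrite E in Hmod.
have m1 : 1 < m by move: Hmod; case: m Hm => [|[|m]] //.
have pp := pdiv_prime m1; have pd := pdiv_dvd m.
set p := pdiv m in pp pd *.
have [p3|p3] := eqVneq (p %% 4) 3; first by exists p.
case/dvdnP: pd => m' Em.
have p1 : p %% 4 = 1.
  have H2 : p != 2.
    apply/eqP => E; move: Hmod; rewrite Em E; lia.
  have : ~~ (2 %| p).
    by apply/negP; rewrite (dvdn_prime2 (isT : prime 2) pp) eq_sym (negPf H2).
  move: p3; lia.
have m'mod : m' %% 4 = 3.
  by move: Hmod; rewrite Em -modnMm p1 muln1 modn_mod.
have p2 := prime_gt1 pp.
have m'0 : 0 < m' by move: m'mod; rewrite lt0n; apply: contraPN => /eqP ->.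
have : m' <= M.
  have : m' < m by rewrite Em -{1}(muln1 m') ltn_mul2l m'0 p2.
  lia.
move=> /IH /(_ m'mod) [q [qp qd q3]]; exists q; split => //.
by rewrite Em dvdn_mulr.
Qed.

Lemma big3mod4 N : exists p, [/\ prime p, N < p & p %% 4 = 3].
Proof.
have f0 := fact_gt0 N.
have Hm : (4 * N`! - 1) %% 4 = 3.
  have -> : 4 * N`! - 1 = 3 + 4 * (N`! - 1) by lia.
  by rewrite addnC mulnC modnMDl.
have [p [pp pd p3]] := prime3mod4 _ Hm.
exists p; split => //; rewrite ltnNge; apply/negP => pN.
have pf : p %| 4 * N`! by rewrite dvdn_mull // dvdn_fact // prime_gt0.
have : p %| 1.
  have -> : 1 = 4 * N`! - (4 * N`! - 1) by lia.
  by rewrite dvdn_sub.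
by rewrite dvdn1 => /eqP E; rewrite E in pp.
Qed.

Theorem proposition1 :
  (forall N : nat, exists n : nat, (N < n) /\ V n < V n.+1) /\
  (forall N : nat, exists n : nat, (N < n) /\ V n.+1 < V n).
Proof.
split=> N.
- have [p Np pp] := prime_above N.+1.
  have p1 := prime_gt1 pp.
  exists p.-1; split; first lia.
  rewrite prednK; last lia. rewrite (V_prime _ pp).
  have := V_le p.-1; lia.
- have [p [pp Np p3]] := big3mod4 (N + 7).
  exists p; split; first lia.
  rewrite (V_prime _ pp).
  have E : p.+1 = 4 * (p.+1 %/ 4).
    have := divn_eq p 4; rewrite p3; lia.
  rewrite E; have := V_four (p.+1 %/ 4); lia.
Qed.
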